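(* Let $k$ be a field, $(C,\Delta)$ a coassociative coalgebra over $k$ that is skew cocommutative, i.e. $\tau\circ\Delta=-\Delta$ where $\tau(x\otimes y)=y\otimes x$, and let $(L,[\,,\,])$ be a Lie algebra over $k$. Let $\Phi(f\otimes g)(c)=\sum[f(c_{(1)}),g(c_{(2)})]$ for $f,g\in Hom(C,L)$, $\Delta(c)=\sum c_{(1)}\otimes c_{(2)}$. Then $\Phi$ is symmetric, $\Phi(g\otimes f)=\Phi(f\otimes g)$, and satisfies the Jacobi identity $\Phi(f\otimes\Phi(g\otimes h))+\Phi(g\otimes\Phi(h\otimes f))+\Phi(h\otimes\Phi(f\otimes g))=0$ for all $f,g,h\in Hom(C,L)$.
   Context: $Hom(C,L)$ denotes the vector space of $k$-linear maps $C\to L$. *)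

(* Defs.v *)
From HB Require Import structures.
From mathcomp Require Import all_boot all_order all_algebra.
Set Implicit Arguments. Unset Strict Implicit. Unset Printing Implicit Defensive.
Import GRing.Theory.
Local Open Scope ring_scope.

(* Elements of C (x) C (resp. C (x) C (x) C) are represented by formal finite
   sums of pure tensors, i.e. sequences of pairs (triples).  Two formal sums
   denote the same tensor iff they agree under every bilinear (trilinear)
   map into every K-vector space: this is the universal property defining
   the tensor product. *)

Section Tensors.
Variables (K : fieldType) (C : lmodType K).

Definition bilinear_map (W : lmodType K) (B : C -> C -> W) : Prop :=
  (forall (a : K) x y z, B (a *: x + y) z = a *: B x z + B y z) /\
  (forall (a : K) x y z, B z (a *: x + y) = a *: B z x + B z y).

Definition trilinear_map (W : lmodType K) (T : C -> C -> C -> W) : Prop :=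
  (forall (a : K) x y u v, T (a *: x + y) u v = a *: T x u v + T y u v) /\
  (forall (a : K) x y u v, T u (a *: x + y) v = a *: T u x v + T u y v) /\
  (forall (a : K) x y u v, T u v (a *: x + y) = a *: T u v x + T u v y).

Definition teq2 (s t : seq (C * C)) : Prop :=
  forall (W : lmodType K) (B : C -> C -> W), bilinear_map B ->
    \sum_(p <- s) B p.1 p.2 = \sum_(p <- t) B p.1 p.2.

Definition teq3 (s t : seq (C * C * C)) : Prop :=
  forall (W : lmodType K) (T : C -> C -> C -> W), trilinear_map T ->
    \sum_(p <- s) T p.1.1 p.1.2 p.2 = \sum_(p <- t) T p.1.1 p.1.2 p.2.

Definition comul_linear (Delta : C -> seq (C * C)) : Prop :=
  forall (a : K) x y,
    teq2 (Delta (a *: x + y)) ([seq (a *: p.1, p.2) | p <- Delta x] ++ Delta y).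

Definition comul_left (Delta : C -> seq (C * C)) (c : C) : seq (C * C * C) :=
  flatten [seq [seq (q.1, q.2, p.2) | q <- Delta p.1] | p <- Delta c].

Definition comul_right (Delta : C -> seq (C * C)) (c : C) : seq (C * C * C) :=
  flatten [seq [seq (p.1, q.1, q.2) | q <- Delta p.2] | p <- Delta c].

Definition coassociative (Delta : C -> seq (C * C)) : Prop :=
  forall c, teq3 (comul_left Delta c) (comul_right Delta c).

Definition skew_cocommutative (Delta : C -> seq (C * C)) : Prop :=
  forall c, teq2 [seq (p.2, p.1) | p <- Delta c] [seq (- p.1, p.2) | p <- Delta c].

End Tensors.

Section Lie.
Variables (K : fieldType) (L : lmodType K).

Definition lie_bracket (br : L -> L -> L) : Prop :=
  [/\ (forall (a : K) x y z, br (a *: x + y) z = a *: br x z + br y z),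
      (forall (a : K) x y z, br z (a *: x + y) = a *: br z x + br z y),
      (forall x, br x x = 0) &
      (forall x y z, br x (br y z) + br y (br z x) + br z (br x y) = 0)].

End Lie.

Definition Phi (K : fieldType) (C L : lmodType K) (Delta : C -> seq (C * C))
  (br : L -> L -> L) (f g : C -> L) : C -> L :=
  fun c => \sum_(p <- Delta c) br (f p.1) (g p.2).

(* Main.v *)
Require Import Defs.
From HB Require Import structures.
From mathcomp Require Import all_boot all_order all_algebra.
Import GRing.Theory.
Local Open Scope ring_scope.

Set Implicit Arguments. Unset Strict Implicit.
Section Aux.
Variables (K : fieldType).

Lemma lin_add (V W : lmodType K) (phi : V -> W) :
  (forall (a : K) x y, phi (a *: x + y) = a *: phi x + phi y) ->
  forall x y, phi (x + y) = phi x + phi y.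
Proof. by move=> H x y; rewrite -[x in LHS]scale1r H scale1r. Qed.

Lemma lin_0 (V W : lmodType K) (phi : V -> W) :
  (forall (a : K) x y, phi (a *: x + y) = a *: phi x + phi y) -> phi 0 = 0.
Proof.
move=> H; have E := lin_add H 0 0; rewrite addr0 in E.
by apply/(addrI (phi 0)); rewrite addr0 -E.
Qed.

Lemma lin_Z (V W : lmodType K) (phi : V -> W) :
  (forall (a : K) x y, phi (a *: x + y) = a *: phi x + phi y) ->
  forall a x, phi (a *: x) = a *: phi x.
Proof. by move=> H a x; rewrite -[a *: x]addr0 H (lin_0 H) addr0. Qed.

Lemma lin_N (V W : lmodType K) (phi : V -> W) :
  (forall (a : K) x y, phi (a *: x + y) = a *: phi x + phi y) ->
  forall x, phi (- x) = - phi x.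
Proof. by move=> H x; rewrite -scaleN1r (lin_Z H) scaleN1r. Qed.

Lemma lin_sum (V W : lmodType K) (phi : V -> W) I (r : seq I) (F : I -> V) :
  (forall (a : K) x y, phi (a *: x + y) = a *: phi x + phi y) ->
  phi (\sum_(i <- r) F i) = \sum_(i <- r) phi (F i).
Proof.
move=> H; elim: r => [|i r IH]; first by rewrite !big_nil (lin_0 H).
by rewrite !big_cons (lin_add H) IH.
Qed.

Variables (C L : lmodType K) (Delta : C -> seq (C * C)).
Hypothesis Hcoass : coassociative Delta.
Hypothesis Hskew : skew_cocommutative Delta.

Definition S (T : C -> C -> C -> L) c :=
  \sum_(t <- comul_right Delta c) T t.1.1 t.1.2 t.2.
Definition SL (T : C -> C -> C -> L) c :=
  \sum_(t <- comul_left Delta c) T t.1.1 t.1.2 t.2.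

Lemma S_swap23 T c : trilinear_map T ->
  S T c = - S (fun a b d => T a d b) c.
Proof.
move=> [H1 [H2 H3]].
rewrite /S /comul_right !big_flatten /= !big_map -sumrN.
apply: eq_bigr => p _; rewrite !big_map /=.
have HB : bilinear_map (fun x y => T p.1 y x).
  by split=> a x y z; [apply: H3 | apply: H2].
have := Hskew p.2 HB; rewrite !big_map /= => ->.
rewrite -sumrN; apply: eq_bigr => q _.
by rewrite (lin_N (fun a x y => H3 a x y p.1 q.2)).
Qed.

Lemma SL_swap12 T c : trilinear_map T ->
  SL T c = - SL (fun a b d => T b a d) c.
Proof.
move=> [H1 [H2 H3]].
rewrite /SL /comul_left !big_flatten /= !big_map -sumrN.
apply: eq_bigr => p _; rewrite !big_map /=.
have HB : bilinear_map (fun x y => T y x p.2).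
  split=> a x y z; [apply: H2 | apply: H1].
have := Hskew p.1 HB; rewrite !big_map /= => ->.
rewrite -sumrN; apply: eq_bigr => q _.
by rewrite (lin_N (fun a x y => H2 a x y q.2 p.2)).
Qed.

Lemma tri12 (T : C -> C -> C -> L) : trilinear_map T -> trilinear_map (fun a b d => T b a d).
Proof. by move=> [H1 [H2 H3]]; split; [|split]=> *; [apply: H2|apply: H1|apply: H3]. Qed.

Lemma tri23 (T : C -> C -> C -> L) : trilinear_map T -> trilinear_map (fun a b d => T a d b).
Proof. by move=> [H1 [H2 H3]]; split; [|split]=> *; [apply: H1|apply: H3|apply: H2]. Qed.

Lemma S_cyc T c : trilinear_map T -> S T c = S (fun a b d => T d a b) c.
Proof.
move=> HT.
have E : S T c = SL T c by rewrite /S /SL (Hcoass c HT).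
rewrite E SL_swap12 //.
have HT' := tri12 HT.
rewrite /SL (Hcoass c HT') -/(S _ c) S_swap23 ?opprK //.
exact: (tri23 HT').
Qed.

End Aux.
Unset Implicit Arguments.

Theorem corollary2 (K : fieldType) (C L : lmodType K)
  (Delta : C -> seq (C * C)) (br : L -> L -> L)
  (HDlin : comul_linear Delta) (Hcoass : coassociative Delta)
  (Hskew : skew_cocommutative Delta) (Hlie : lie_bracket br)
  (f g h : {linear C -> L}) :
  (forall c, Phi Delta br g f c = Phi Delta br f g c) /\
  (forall c, Phi Delta br f (Phi Delta br g h) c
             + Phi Delta br g (Phi Delta br h f) c
             + Phi Delta br h (Phi Delta br f g) c = 0).
Proof.
case: Hlie => Hl Hr Hal Hjac.
have Hl' z : forall (a : K) x y, br (a *: x + y) z = a *: br x z + br y z by move=> *; apply: Hl.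
have Hr' z : forall (a : K) x y, br z (a *: x + y) = a *: br z x + br z y by move=> *; apply: Hr.
have anti x y : br x y = - br y x.
  apply/eqP; rewrite -subr_eq0 opprK; apply/eqP.
  have := Hal (x + y); rewrite (lin_add (Hl' _)) !(lin_add (Hr' _)) !Hal add0r addr0.
  by rewrite addrC.
have tri (u v w : {linear C -> L}) :
    trilinear_map (fun a b d => br (u a) (br (v b) (w d))).
  split; [|split]=> a x y p q; rewrite linearP /=.
  - by rewrite Hl.
  - by rewrite Hl Hr.
  - by rewrite Hr Hr.
have nest (u v w : {linear C -> L}) c :
    Phi Delta br u (Phi Delta br v w) c = S Delta (fun a b d => br (u a) (br (v b) (w d))) c.
  rewrite /Phi /S /comul_right big_flatten /= big_map.
  apply: eq_bigr => p _; rewrite big_map (lin_sum _ _ (Hr' _)) //.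
split.
  move=> c; rewrite /Phi.
  have HB : bilinear_map (fun x y => br (g y) (f x)).
    by split=> a x y z; rewrite linearP /= ?Hl ?Hr.
  have := Hskew c L _ HB; rewrite !big_map /= => ->.
  by apply: eq_bigr => p _; rewrite linearN (lin_N (Hr' _)) anti opprK.
move=> c; rewrite !nest.
have E1 := S_cyc Hcoass Hskew c (tri12 (tri23 (tri g h f))).
have E2 := S_cyc Hcoass Hskew c (tri h f g).
rewrite /= in E1 E2.
rewrite -E1 E2 /S -!big_split /= big1_seq // => t _.
Qed.
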